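(* Let $(\Omega(\mathcal{A}),d)$ be a differential calculus on a complex algebra $\mathcal{A}$, with $\mathcal{E}=\Omega^1(\mathcal{A})$ a finitely generated projective right $\mathcal{A}$-module, such that: (1) $\mathcal{E}=\mathcal{Z}(\mathcal{E})\otimes_{\mathcal{Z}(\mathcal{A})}\mathcal{A}$ (via the multiplication map); (2) $\mathcal{E}\otimes_{\mathcal{A}}\mathcal{E}=\ker(\wedge)\oplus\mathcal{F}$ where $\mathcal{F}$ is a right $\mathcal{A}$-submodule and $Q=\wedge|_{\mathcal{F}}:\mathcal{F}\to\Omega^2(\mathcal{A})$ is a right $\mathcal{A}$-linear isomorphism; (3) the map $\sigma=2P_{\rm sym}-1$ satisfies $\sigma(\omega\otimes_{\mathcal{A}}\eta)=\eta\otimes_{\mathcal{A}}\omega$ for all $\omega,\eta\in\mathcal{Z}(\mathcal{E})$. If $g$ is a pseudo-Riemannian bilinear metric on $\mathcal{E}$, then there exists a unique connection on $\mathcal{E}$ which is torsionless and compatible with $g$ on $\mathcal{Z}(\mathcal{E})$.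
   Context: A differential calculus: $\Omega(\mathcal{A})=\oplus_{j\ge0}\Omega^j(\mathcal{A})$, $\Omega^0=\mathcal{A}$, bimodules $\Omega^j$, an $\mathcal{A}$-bimodule product $\wedge$ with $\wedge(\Omega^j\otimes_{\mathcal{A}}\Omega^k)\subseteq\Omega^{j+k}$, $d:\Omega^j\to\Omega^{j+1}$ with $d^2=0$ and $d(\omega\wedge\eta)=d\omega\wedge\eta+(-1)^{\deg\omega}\omega\wedge d\eta$, and $\Omega^j$ the right span of $da_0\wedge\cdots\wedge da_{j-1}$. $\wedge:\mathcal{E}\otimes_{\mathcal{A}}\mathcal{E}\to\Omega^2(\mathcal{A})$ is the induced product. $P_{\rm sym}$ is the idempotent on $\mathcal{E}\otimes_{\mathcal{A}}\mathcal{E}$ with image $\ker\wedge$ and kernel $\mathcal{F}$. For a bimodule $\mathcal{M}$, $\mathcal{Z}(\mathcal{M})=\{m:am=ma\ \forall a\in\mathcal{A}\}$, and $\mathcal{Z}(\mathcal{A})$ is the center of $\mathcal{A}$. A connection is a $\mathbb{C}$-linear $\nabla:\mathcal{E}\to\mathcal{E}\otimes_{\mathcal{A}}\mathcal{E}$ with $\nabla(\omega a)=\nabla(\omega)a+\omega\otimes_{\mathcal{A}}da$; torsionless means $\wedge\circ\nabla+d=0$. A pseudo-Riemannian bilinear metric is an $\mathcal{A}$-bimodule map $g:\mathcal{E}\otimes_{\mathcal{A}}\mathcal{E}\to\mathcal{A}$ with $g\circ\sigma=g$ such that $e\mapsto g(e\otimes_{\mathcal{A}}-)$ is a right module isomorphism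 $\mathcal{E}\to\mathrm{Hom}_{\mathcal{A}}(\mathcal{E},\mathcal{A})$. $\nabla$ is compatible with $g$ on $\mathcal{Z}(\mathcal{E})$ if for all $\omega,\eta\in\mathcal{Z}(\mathcal{E})$: $(g\otimes_{\mathcal{A}}\mathrm{id})\{\sigma_{23}(\nabla(\omega)\otimes_{\mathcal{A}}\eta)+\omega\otimes_{\mathcal{A}}\nabla(\eta)\}=d(g(\omega\otimes_{\mathcal{A}}\eta))$, with $\sigma_{23}=\mathrm{id}\otimes_{\mathcal{A}}\sigma$ on $\mathcal{E}^{\otimes_{\mathcal{A}}3}$ and $(g\otimes_{\mathcal{A}}\mathrm{id})(x\otimes y\otimes z)=g(x\otimes_{\mathcal{A}}y)z$. *)

(* Defs.v *)
(* Noncommutative differential calculus (degrees <= 2),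
   tensor products over A given by their universal property. *)
From HB Require Import structures.
From mathcomp Require Import all_boot all_order all_algebra.
From mathcomp Require Import reals complex.
Set Implicit Arguments. Unset Strict Implicit. Unset Printing Implicit Defensive.
Import GRing.Theory.
Local Open Scope ring_scope.

Definition additive_fun (U V : zmodType) (f : U -> V) : Prop :=
  forall x y, f (x + y) = f x + f y.

Definition is_bimodule (C : fieldType) (A : algType C) (M : zmodType)
  (l : A -> M -> M) (r : M -> A -> M) : Prop :=
  [/\ [/\ (forall a, additive_fun (l a)), (forall m, additive_fun (l^~ m)),
      (forall a, additive_fun (r^~ a)) & (forall m, additive_fun (r m))],
      (forall a b m, l (a * b) m = l a (l b m)) /\ (forall m, l 1 m = m),
      (forall a b m, r m (a * b) = r (r m a) b) /\ (forall m, r m 1 = m),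
      (forall a b m, l a (r m b) = r (l a m) b) &
      (forall (k : C) m, l k%:A m = r m k%:A)].

Definition central_el (A : nzRingType) (M : zmodType)
  (l : A -> M -> M) (r : M -> A -> M) (x : M) : Prop :=
  forall a, l a x = r x a.
Definition centerA (A : nzRingType) (z : A) : Prop := forall a, z * a = a * z.

Definition balanced (A : nzRingType) (M N P : zmodType)
  (rM : M -> A -> M) (lN : A -> N -> N) (phi : M -> N -> P) : Prop :=
  [/\ (forall m, additive_fun (phi m)), (forall n, additive_fun (phi^~ n)) &
      (forall m a n, phi (rM m a) n = phi m (lN a n))].

Definition is_tensor (A : nzRingType) (M N T : zmodType)
  (rM : M -> A -> M) (lN : A -> N -> N) (t : M -> N -> T) : Prop :=
  balanced rM lN t /\
  forall (P : zmodType) (phi : M -> N -> P), balanced rM lN phi ->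
    exists psi : T -> P,
      [/\ additive_fun psi, (forall m n, psi (t m n) = phi m n) &
          (forall psi' : T -> P, additive_fun psi' ->
             (forall m n, psi' (t m n) = phi m n) -> psi' =1 psi)].

(* (T1, t1) is a tensor product Z(E) (x)_{Z(A)} A; t1 is only relevant on
   central first arguments *)
Definition zbalanced (A : nzRingType) (E P : zmodType)
  (lE : A -> E -> E) (rE : E -> A -> E) (phi : E -> A -> P) : Prop :=
  [/\ (forall w, central_el lE rE w -> additive_fun (phi w)),
      (forall w w' a, central_el lE rE w -> central_el lE rE w' ->
          phi (w + w') a = phi w a + phi w' a) &
      (forall w z a, central_el lE rE w -> centerA z ->
          phi (rE w z) a = phi w (z * a))].

Definition is_ztensor (A : nzRingType) (E T1 : zmodType)
  (lE : A -> E -> E) (rE : E -> A -> E) (t1 : E -> A -> T1) : Prop :=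
  zbalanced lE rE t1 /\
  forall (P : zmodType) (phi : E -> A -> P), zbalanced lE rE phi ->
    exists psi : T1 -> P,
      [/\ additive_fun psi,
          (forall w a, central_el lE rE w -> psi (t1 w a) = phi w a) &
          (forall psi' : T1 -> P, additive_fun psi' ->
             (forall w a, central_el lE rE w -> psi' (t1 w a) = phi w a) ->
             psi' =1 psi)].

(* Differential calculus, truncated to degrees 0,1,2 :
   Omega^0 = A, Omega^1 = E, Omega^2 = O2, d0 : A -> E, d1 : E -> O2,
   wedge : E x E -> O2 (balanced, bimodule-compatible) *)
Definition diff_calculus (C : fieldType) (A : algType C)
  (E : zmodType) (lE : A -> E -> E) (rE : E -> A -> E)
  (O2 : zmodType) (lO : A -> O2 -> O2) (rO : O2 -> A -> O2)
  (d0 : A -> E) (d1 : E -> O2) (wedge : E -> E -> O2) : Prop :=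
  [/\ is_bimodule lE rE /\ is_bimodule lO rO,
      [/\ balanced rE lE wedge,
          (forall a x y, wedge (lE a x) y = lO a (wedge x y)) &
          (forall a x y, wedge x (rE y a) = rO (wedge x y) a)],
      [/\ additive_fun d0, (forall (k : C) a, d0 (k *: a) = lE k%:A (d0 a)) &
          (forall a b, d0 (a * b) = rE (d0 a) b + lE a (d0 b))],
      [/\ additive_fun d1, (forall (k : C) e, d1 (lE k%:A e) = lO k%:A (d1 e)),
          (forall a, d1 (d0 a) = 0),
          (forall a e, d1 (lE a e) = wedge (d0 a) e + lO a (d1 e)) &
          (forall a e, d1 (rE e a) = rO (d1 e) a - wedge e (d0 a))] &
      (forall e : E, exists n (u v : 'I_n -> A),
          e = \sum_(i < n) rE (d0 (u i)) (v i)) /\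
      (forall w : O2, exists n (u v c : 'I_n -> A),
          w = \sum_(i < n) rO (wedge (d0 (u i)) (d0 (v i))) (c i))].

(* E is a finitely generated projective right A-module: a direct summand
   of a free module A^n *)
Definition fg_projective (A : nzRingType) (E : zmodType) (rE : E -> A -> E) : Prop :=
  exists n (i : E -> {ffun 'I_n -> A}) (p : {ffun 'I_n -> A} -> E),
    [/\ additive_fun i, (forall e a, i (rE e a) = [ffun k => i e k * a]),
        additive_fun p, (forall (v : {ffun 'I_n -> A}) a, p [ffun k => v k * a] = rE (p v) a) &
        (forall e, p (i e) = e)].

(* Main.v *)
Require Import Defs.
From HB Require Import structures.
From mathcomp Require Import all_boot all_order all_algebra.
From mathcomp Require Import reals complex.
From Stdlib Require Import ClassicalEpsilon.
Import GRing.Theory Num.Theory.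
Local Open Scope ring_scope.
Set Implicit Arguments. Unset Strict Implicit. Unset Printing Implicit Defensive.

Lemma af0 (U V : zmodType) (f : U -> V) : additive_fun f -> f 0 = 0.
Proof. by move=> h; apply: (addrI (f 0)); rewrite -h !addr0. Qed.
Lemma afN (U V : zmodType) (f : U -> V) x : additive_fun f -> f (- x) = - f x.
Proof. by move=> h; apply: (addrI (f x)); rewrite -h !subrr af0. Qed.
Lemma afB (U V : zmodType) (f : U -> V) x y : additive_fun f -> f (x - y) = f x - f y.
Proof. by move=> h; rewrite h afN. Qed.
Lemma af_sum (U V : zmodType) (f : U -> V) n (G : 'I_n -> U) : additive_fun f ->
  f (\sum_(i < n) G i) = \sum_(i < n) f (G i).
Proof. by move=> h; rewrite (big_morph f h (af0 h)). Qed.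
Lemma af_comp (U V W : zmodType) (f : V -> W) (h : U -> V) :
  additive_fun f -> additive_fun h -> additive_fun (fun x => f (h x)).
Proof. by move=> hf hh x y; rewrite hh hf. Qed.
Lemma af_add (U V : zmodType) (f h : U -> V) :
  additive_fun f -> additive_fun h -> additive_fun (fun x => f x + h x).
Proof. by move=> hf hh x y; rewrite hf hh addrACA. Qed.
Lemma af_opp (U V : zmodType) (f : U -> V) :
  additive_fun f -> additive_fun (fun x => - f x).
Proof. by move=> hf x y; rewrite hf opprD. Qed.
Lemma af_zero (U V : zmodType) : additive_fun (fun _ : U => (0 : V)).
Proof. by move=> x y; rewrite addr0. Qed.
Lemma af_sumf (U V : zmodType) n (f : 'I_n -> U -> V) :
  (forall i, additive_fun (f i)) -> additive_fun (fun x => \sum_(i < n) f i x).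
Proof. by move=> h x y; rewrite -big_split; apply: eq_bigr => i _; rewrite h. Qed.

Lemma zmod1 (V : zmodType) (a b c d : V) : a + c - b - (d + c) = a - b - d.
Proof. by rewrite opprD addrA [a + c - b]addrAC [a - b + c - d]addrAC addrK. Qed.
Lemma zmod2 (V : zmodType) (a a' b b' c c' : V) :
  (a + a') - (b + b') - (c + c') = (a - b - c) + (a' - b' - c').
Proof. by rewrite !opprD !addrA; rewrite -!addrA; congr (_ + _); rewrite addrC -!addrA; congr (_ + _); rewrite addrC -!addrA; congr (_ + _); rewrite addrC -!addrA; congr (_ + _); rewrite addrC. Qed.
Lemma zmod2' (V : zmodType) (a a' b b' c c' : V) :
  (a + a') + (b + b') - (c + c') = (a + b - c) + (a' + b' - c').
Proof. by rewrite (addrACA a a' b b') opprD (addrACA (a + b)). Qed.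
Lemma zmod3 (V : zmodType) (G p r : V) : p + r + (G - p - r) = G.
Proof. by rewrite addrC -[G - p - r]addrA -opprD subrK. Qed.
Lemma zmod4 (V : zmodType) (a b c : V) : (a + b - c) + (a + c - b) = a + a.
Proof. by rewrite -[a + b - c]addrA -[a + c - b]addrA addrACA (addrA (b - c)) subrK subrr addr0. Qed.

Section Main.
Variable R : realType.
Variable A : algType R[i].
Variable E : zmodType.
Variable lE : A -> E -> E.
Variable rE : E -> A -> E.
Variable O2 : zmodType.
Variable lO : A -> O2 -> O2.
Variable rO : O2 -> A -> O2.
Variable d0 : A -> E.
Variable d1 : E -> O2.
Variable wedge : E -> E -> O2.
Hypothesis Hcalc : diff_calculus lE rE lO rO d0 d1 wedge.
Hypothesis HEproj : fg_projective rE.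
Variable T : zmodType.
Variable tens : E -> E -> T.
Hypothesis HT : is_tensor rE lE tens.
Variable lT : A -> T -> T.
Variable rT : T -> A -> T.
Hypothesis HlT : (forall a, additive_fun (lT a)) /\
         forall a x y, lT a (tens x y) = tens (lE a x) y.
Hypothesis HrT : (forall a, additive_fun (rT^~ a)) /\
         forall a x y, rT (tens x y) a = tens x (rE y a).
Variable wedgeT : T -> O2.
Hypothesis HwedgeT : additive_fun wedgeT /\ forall x y, wedgeT (tens x y) = wedge x y.
Variable T1 : zmodType.
Variable t1 : E -> A -> T1.
Hypothesis HT1 : is_ztensor lE rE t1.
Variable mu : T1 -> E.
Hypothesis Hmu : additive_fun mu /\
         forall w a, central_el lE rE w -> mu (t1 w a) = rE w a.
Hypothesis H1 : bijective mu.
Variable F : T -> Prop.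
Hypothesis HF : [/\ F 0, (forall t t', F t -> F t' -> F (t + t')),
            (forall t, F t -> F (- t)) & (forall t a, F t -> F (rT t a))].
Hypothesis H2sum : (forall t, exists k f, [/\ wedgeT k = 0, F f & t = k + f]) /\
           (forall t, wedgeT t = 0 -> F t -> t = 0).
Hypothesis H2Q : (forall f f', F f -> F f' -> wedgeT f = wedgeT f' -> f = f') /\
         (forall w, exists f, F f /\ wedgeT f = w).
Variable Psym : T -> T.
Hypothesis HPsym : forall t, wedgeT (Psym t) = 0 /\ F (t - Psym t).
Hypothesis H3 : forall w e, central_el lE rE w -> central_el lE rE e ->
          Psym (tens w e) *+ 2 - tens w e = tens e w.
Variable g : T -> A.
Hypothesis Hg : [/\ additive_fun g, (forall a t, g (lT a t) = a * g t),
            (forall a t, g (rT t a) = g t * a),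
            (forall t, g (Psym t *+ 2 - t) = g t) &
            (forall e, (forall f, g (tens e f) = 0) -> e = 0) /\
            (forall phi : E -> A, additive_fun phi ->
               (forall f b, phi (rE f b) = phi f * b) ->
               exists e, forall f, g (tens e f) = phi f)].
Variable T3 : zmodType.
Variable tens3 : E -> T -> T3.
Hypothesis HT3 : is_tensor rE lT tens3.
Variable rtens : T -> E -> T3.
Hypothesis Hrtens : (forall e, additive_fun (rtens^~ e)) /\
            forall x y e, rtens (tens x y) e = tens3 x (tens y e).
Variable sigma23 : T3 -> T3.
Hypothesis Hsigma23 : additive_fun sigma23 /\
              forall x t, sigma23 (tens3 x t) = tens3 x (Psym t *+ 2 - t).
Variable gid : T3 -> E.
Hypothesis Hgid : additive_fun gid /\
          forall x y z, gid (tens3 x (tens y z)) = lE (g (tens x y)) z.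
Local Notation central := (central_el lE rE).

Lemma lEaddr a : additive_fun (lE a). Proof. by case: Hcalc => [[[[]]]]. Qed.
Lemma lEaddl m : additive_fun (lE^~ m). Proof. by case: Hcalc => [[[[]]]]. Qed.
Lemma rEaddl a : additive_fun (rE^~ a). Proof. by case: Hcalc => [[[[]]]]. Qed.
Lemma rEaddr m : additive_fun (rE m). Proof. by case: Hcalc => [[[[]]]]. Qed.
Lemma lEM a b m : lE (a * b) m = lE a (lE b m). Proof. by case: Hcalc => [[[_ []]]]. Qed.
Lemma lE1 m : lE 1 m = m. Proof. by case: Hcalc => [[[_ []]]]. Qed.
Lemma rEM m a b : rE m (a * b) = rE (rE m a) b. Proof. by case: Hcalc => [[[_ _ []]]]. Qed.
Lemma rE1 m : rE m 1 = m. Proof. by case: Hcalc => [[[_ _ []]]]. Qed.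
Lemma lrE a m b : lE a (rE m b) = rE (lE a m) b. Proof. by case: Hcalc => [[[]]]. Qed.
Lemma lOaddr a : additive_fun (lO a). Proof. by case: Hcalc => [[_ [[]]]]. Qed.
Lemma lOaddl m : additive_fun (lO^~ m). Proof. by case: Hcalc => [[_ [[]]]]. Qed.
Lemma rOaddl a : additive_fun (rO^~ a). Proof. by case: Hcalc => [[_ [[]]]]. Qed.
Lemma lO1 m : lO 1 m = m. Proof. by case: Hcalc => [[_ [_ []]]]. Qed.
Lemma wedge_r x y a : wedge x (rE y a) = rO (wedge x y) a. Proof. by case: Hcalc => [_ []]. Qed.
Lemma d0add : additive_fun d0. Proof. by case: Hcalc => [_ _ []]. Qed.
Lemma d0M a b : d0 (a * b) = rE (d0 a) b + lE a (d0 b). Proof. by case: Hcalc => [_ _ []]. Qed.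
Lemma d1add : additive_fun d1. Proof. by case: Hcalc => [_ _ _ []]. Qed.
Lemma d1r a e : d1 (rE e a) = rO (d1 e) a - wedge e (d0 a). Proof. by case: Hcalc => [_ _ _ []]. Qed.

Lemma tensaddr m : additive_fun (tens m). Proof. by case: HT => [[]]. Qed.
Lemma tensaddl n : additive_fun (tens^~ n). Proof. by case: HT => [[]]. Qed.
Lemma tensbal m a n : tens (rE m a) n = tens m (lE a n). Proof. by case: HT => [[]]. Qed.
Lemma tens3addr m : additive_fun (tens3 m). Proof. by case: HT3 => [[]]. Qed.
Lemma tens3addl n : additive_fun (tens3^~ n). Proof. by case: HT3 => [[]]. Qed.
Lemma tens3bal m a n : tens3 (rE m a) n = tens3 m (lT a n). Proof. by case: HT3 => [[]]. Qed.
Lemma gadd : additive_fun g. Proof. by case: Hg. Qed.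
Lemma gl a t : g (lT a t) = a * g t. Proof. by case: Hg. Qed.
Lemma gr a t : g (rT t a) = g t * a. Proof. by case: Hg. Qed.
Lemma gsig t : g (Psym t *+ 2 - t) = g t. Proof. by case: Hg. Qed.
Lemma ginj e : (forall f, g (tens e f) = 0) -> e = 0. Proof. by case: Hg => _ _ _ _ [h1 h2]; first [apply: h1 | apply: h2]. Qed.
Lemma gsurj (phi : E -> A) : additive_fun phi ->
  (forall f b, phi (rE f b) = phi f * b) -> exists e, forall f, g (tens e f) = phi f.
Proof. by case: Hg => _ _ _ _ [h1 h2]; first [apply: h1 | apply: h2]. Qed.
Lemma gidadd : additive_fun gid. Proof. by case: Hgid. Qed.
Lemma gidE x y z : gid (tens3 x (tens y z)) = lE (g (tens x y)) z. Proof. by case: Hgid. Qed.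
Lemma lTadd a : additive_fun (lT a). Proof. by case: HlT. Qed.
Lemma lTE a x y : lT a (tens x y) = tens (lE a x) y. Proof. by case: HlT. Qed.
Lemma rTadd a : additive_fun (rT^~ a). Proof. by case: HrT. Qed.
Lemma rTE a x y : rT (tens x y) a = tens x (rE y a). Proof. by case: HrT. Qed.
Lemma wTadd : additive_fun wedgeT. Proof. by case: HwedgeT. Qed.
Lemma wTE x y : wedgeT (tens x y) = wedge x y. Proof. by case: HwedgeT. Qed.

Lemma muinv_ex : exists2 mi : E -> T1, additive_fun mi &
  (cancel mu mi /\ cancel mi mu).
Proof.
case: H1 => mi K1 K2; exists mi => //.
move=> x y; have muinj : injective mu by exact: can_inj K1.
apply: muinj; case: Hmu => ha _; by rewrite ha !K2.
Qed.

Lemma indE (P : zmodType) (f1 f2 : E -> P) : additive_fun f1 -> additive_fun f2 ->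
  (forall w a, central w -> f1 (rE w a) = f2 (rE w a)) -> f1 =1 f2.
Proof.
move=> a1 a2 h.
have zb : zbalanced lE rE (fun w a => f1 (rE w a)).
  split.
  - by move=> w _; apply: af_comp => //; apply: rEaddr.
  - by move=> w w' a _ _; rewrite rEaddl a1.
  - by move=> w z a _ _; rewrite rEM.
case: HT1 => _ /(_ P _ zb) [psi [_ _ U]].
case: muinv_ex => mi _ [K1 K2].
case: Hmu => ha hm.
have e1 := U (fun x => f1 (mu x)) (af_comp a1 ha) (fun w a cw => congr1 f1 (hm w a cw)).
have e2 := U (fun x => f2 (mu x)) (af_comp a2 ha) (fun w a cw => etrans (congr1 f2 (hm w a cw)) (esym (h w a cw))).
by move=> e; rewrite -(K2 e) e1 e2.
Qed.

Lemma extE (P : zmodType) (phi : E -> A -> P) : zbalanced lE rE phi ->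
  exists H : E -> P, additive_fun H /\ forall w a, central w -> H (rE w a) = phi w a.
Proof.
move=> zb; case: HT1 => _ /(_ P _ zb) [psi [pa pE _]].
case: muinv_ex => mi ma [K1 K2]; case: Hmu => ha hm.
exists (fun e => psi (mi e)); split; first exact: af_comp.
by move=> w a cw; rewrite -hm // K1 pE.
Qed.

Lemma indT (P : zmodType) (f1 f2 : T -> P) : additive_fun f1 -> additive_fun f2 ->
  (forall x y, f1 (tens x y) = f2 (tens x y)) -> f1 =1 f2.
Proof.
move=> a1 a2 h.
have bal : balanced rE lE (fun x y => f1 (tens x y)).
  split.
  - by move=> m; apply: af_comp => //; apply: tensaddr.
  - by move=> n; apply: (af_comp a1 (tensaddl n)).
  - by move=> m a n; rewrite tensbal.
case: HT => _ /(_ P _ bal) [psi [_ _ U]].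
have e1 := U f1 a1 (fun x y => erefl).
have e2 := U f2 a2 (fun x y => esym (h x y)).
by move=> t; rewrite e1 e2.
Qed.

Lemma indT3 (P : zmodType) (f1 f2 : T3 -> P) : additive_fun f1 -> additive_fun f2 ->
  (forall x y, f1 (tens3 x y) = f2 (tens3 x y)) -> f1 =1 f2.
Proof.
move=> a1 a2 h.
have bal : balanced rE lT (fun x y => f1 (tens3 x y)).
  split.
  - by move=> m; apply: af_comp => //; apply: tens3addr.
  - by move=> n; apply: (af_comp a1 (tens3addl n)).
  - by move=> m a n; rewrite tens3bal.
case: HT3 => _ /(_ P _ bal) [psi [_ _ U]].
have e1 := U f1 a1 (fun x y => erefl).
have e2 := U f2 a2 (fun x y => esym (h x y)).
by move=> t; rewrite e1 e2.
Qed.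

Lemma rTaddr t : additive_fun (rT t).
Proof.
move=> a b; move: t; apply: indT.
- by move=> x y; rewrite !rTadd.
- by apply: af_add; apply: rTadd.
- by move=> x y; rewrite !rTE rEaddr tensaddr.
Qed.
Lemma rTM t a b : rT t (a * b) = rT (rT t a) b.
Proof.
move: t; apply: indT.
- exact: rTadd.
- exact: (af_comp (rTadd b) (rTadd a)).
- by move=> x y; rewrite !rTE rEM.
Qed.
Lemma rT1 t : rT t 1 = t.
Proof.
move: t; apply: indT; [exact: rTadd | by move=> ? ? | by move=> x y; rewrite rTE rE1].
Qed.


Lemma central_rE w z : central w -> centerA z -> central (rE w z).
Proof.
move=> cw cz a; rewrite lrE cw -!rEM; congr (rE w _); exact: (esym (cz a)).
Qed.
Lemma centralD w w' : central w -> central w' -> central (w + w').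
Proof. by move=> c1 c2 a; rewrite lEaddr rEaddl c1 c2. Qed.

Lemma Ecent z x : centerA z -> lE z x = rE x z.
Proof.
move=> cz; move: x; apply: indE; [exact: lEaddr | exact: rEaddl |].
by move=> w a cw; rewrite lrE cw -!rEM cz.
Qed.

Lemma Tcent z t : centerA z -> lT z t = rT t z.
Proof.
move=> cz; move: t; apply: indT; [exact: lTadd | exact: rTadd |].
by move=> x y; rewrite lTE rTE Ecent // tensbal Ecent.
Qed.

Lemma wTr t a : wedgeT (rT t a) = rO (wedgeT t) a.
Proof.
move: t; apply: indT.
- exact: (af_comp wTadd (rTadd a)).
- exact: (af_comp (rOaddl a) wTadd).
- by move=> x y; rewrite rTE !wTE wedge_r.
Qed.

Lemma g_r2 x y a : g (tens x (rE y a)) = g (tens x y) * a.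
Proof. by rewrite -rTE gr. Qed.
Lemma g_l2 x y a : g (tens (lE a x) y) = a * g (tens x y).
Proof. by rewrite -lTE gl. Qed.

Lemma Fsub x y : F x -> F y -> F (x - y).
Proof. by case: HF => _ hD hN _ fx fy; apply: hD => //; apply: hN. Qed.
Lemma Fr x a : F x -> F (rT x a).
Proof. by case: HF => _ _ _ h; apply: h. Qed.

Lemma dec_eq k1 f1 k2 f2 : wedgeT k1 = 0 -> wedgeT k2 = 0 -> F f1 -> F f2 ->
  k1 + f1 = k2 + f2 -> k1 = k2.
Proof.
move=> w1 w2 F1 F2 e.
have ef : k1 - k2 = f2 - f1.
  by apply/eqP; rewrite subr_eq addrAC [f2 + k2]addrC -e addrK.
have : k1 - k2 = 0.
  case: H2sum => _ h; apply: h; first by rewrite (afB _ _ wTadd) w1 w2 subrr.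
  by rewrite ef; apply: Fsub.
by move/eqP; rewrite subr_eq0 => /eqP.
Qed.

Lemma PsymU t k : wedgeT k = 0 -> F (t - k) -> Psym t = k.
Proof.
move=> wk fk; have [w1 f1] := HPsym t.
by apply: (dec_eq w1 wk f1 fk); rewrite !subrKC.
Qed.

Lemma PsymD t t' : Psym (t + t') = Psym t + Psym t'.
Proof.
apply: PsymU; first by rewrite wTadd !(proj1 (HPsym _)) addr0.
rewrite opprD addrACA; case: HF => _ hD _ _; apply: hD; exact: (proj2 (HPsym _)).
Qed.
Lemma Psymadd : additive_fun Psym. Proof. exact: PsymD. Qed.

Lemma PsymR t a : Psym (rT t a) = rT (Psym t) a.
Proof.
apply: PsymU; first by rewrite wTr (proj1 (HPsym _)) (af0 (rOaddl a)).
by rewrite -(afB _ _ (rTadd a)); apply: Fr; exact: (proj2 (HPsym _)).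
Qed.

Definition sig t := Psym t *+ 2 - t.
Lemma sigadd : additive_fun sig.
Proof. by move=> x y; rewrite /sig PsymD mulrnDl opprD addrACA. Qed.
Lemma sigR t a : sig (rT t a) = rT (sig t) a.
Proof. by rewrite /sig PsymR (afB _ _ (rTadd a)) !mulr2n (rTadd a). Qed.

Lemma sigflip y e : central e -> sig (tens y e) = tens e y.
Proof.
move=> ce; move: y; apply: indE.
- exact: (af_comp sigadd (tensaddl e)).
- exact: tensaddr.
- move=> w a cw; rewrite tensbal ce -rTE sigR /sig H3 // rTE //.
Qed.

Lemma gsym y e : central e -> g (tens y e) = g (tens e y).
Proof. by move=> ce; rewrite -gsig -/(sig _) sigflip. Qed.

Lemma gcent w e : central w -> central e -> centerA (g (tens w e)).
Proof.
move=> cw ce a; rewrite -gr -gl lTE rTE cw tensbal ce //.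
Qed.

Definition K y t := gid (tens3 y t).
Lemma Kadd y : additive_fun (K y). Proof. exact: (af_comp gidadd (tens3addr y)). Qed.
Lemma KaddL t : additive_fun (K^~ t). Proof. exact: (af_comp gidadd (tens3addl t)). Qed.
Lemma Ktens y u v : K y (tens u v) = lE (g (tens y u)) v. Proof. exact: gidE. Qed.
Lemma Kr y t a : K y (rT t a) = rE (K y t) a.
Proof.
move: t; apply: indT; [exact: (af_comp (Kadd y) (rTadd a)) | exact: (af_comp (rEaddl a) (Kadd y)) |].
by move=> u v; rewrite rTE !Ktens lrE.
Qed.
Lemma Kl y t a : central y -> K y (lT a t) = lE a (K y t).
Proof.
move=> cy; move: t; apply: indT; [exact: (af_comp (Kadd y) (lTadd a)) | exact: (af_comp (lEaddr a) (Kadd y)) |].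
by move=> u v; rewrite lTE !Ktens -tensbal -cy g_l2 lEM.
Qed.
Lemma Kbal y a t : K (rE y a) t = K y (lT a t).
Proof. by rewrite /K tens3bal. Qed.

Lemma sig23add : additive_fun sigma23. Proof. by case: Hsigma23. Qed.
Lemma sig23E x t : sigma23 (tens3 x t) = tens3 x (sig t). Proof. by case: Hsigma23. Qed.
Lemma rtensadd e : additive_fun (rtens^~ e). Proof. by case: Hrtens. Qed.
Lemma rtensE x y e : rtens (tens x y) e = tens3 x (tens y e). Proof. by case: Hrtens. Qed.

Lemma compatK t e : central e -> gid (sigma23 (rtens t e)) = K e t.
Proof.
move=> ce; move: t; apply: indT.
- exact: (af_comp gidadd (af_comp sig23add (rtensadd e))).
- exact: Kadd.
- by move=> u v; rewrite rtensE sig23E sigflip // gidE Ktens gsym.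
Qed.

Lemma pair_inj x x' : (forall z, central z -> g (tens x z) = g (tens x' z)) -> x = x'.
Proof.
move=> h; apply/eqP; rewrite -subr_eq0; apply/eqP; apply: ginj.
apply: (indE (f1 := fun f => g (tens (x - x') f)) (f2 := fun _ => 0)).
- exact: (af_comp gadd (tensaddr _)).
- exact: af_zero.
- by move=> z a cz; rewrite g_r2 (afB _ _ (tensaddl z)) (afB _ _ gadd) h // subrr mul0r.
Qed.

Lemma indTc (P : zmodType) (f1 f2 : T -> P) : additive_fun f1 -> additive_fun f2 ->
  (forall w w' a, central w -> central w' -> f1 (rT (tens w w') a) = f2 (rT (tens w w') a)) ->
  f1 =1 f2.
Proof.
move=> a1 a2 h.
have hw : forall w y, central w -> f1 (tens w y) = f2 (tens w y).
  move=> w y cw; move: y; apply: indE.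
  - exact: (af_comp a1 (tensaddr w)).
  - exact: (af_comp a2 (tensaddr w)).
  - by move=> w' a cw'; rewrite -rTE h.
apply: indT => // x y; move: x; apply: indE.
- exact: (af_comp a1 (tensaddl y)).
- exact: (af_comp a2 (tensaddl y)).
- by move=> w a cw; rewrite tensbal hw.
Qed.

Lemma SW y z t : central y -> central z ->
  g (tens (K y (sig t)) z) = g (tens (K z t) y).
Proof.
move=> cy cz; move: t; apply: indTc.
- exact: (af_comp gadd (af_comp (tensaddl z) (af_comp (Kadd y) sigadd))).
- exact: (af_comp gadd (af_comp (tensaddl y) (Kadd z))).
- move=> w w' a cw cw'.
  rewrite sigR sigflip // !Kr !Ktens !tensbal !g_l2 cz cy !g_r2.
  rewrite (gsym y cw') (gsym w cz) !mulrA; congr (_ * _).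
  exact: (esym (gcent cz cw _)).
Qed.

Lemma frame : exists n (b c : 'I_n -> E),
  forall f, f = \sum_(j < n) rE (b j) (g (tens (c j) f)).
Proof.
case: HEproj => n [i [p [ia ir pa pr pi]]].
have /fin_all_exists [c hc] : forall j : 'I_n, exists e, forall f, g (tens e f) = i f j.
  move=> j; apply: gsurj.
  - by move=> x y; rewrite ia !ffunE.
  - by move=> f b; rewrite ir ffunE.
pose delta (j : 'I_n) : {ffun 'I_n -> A} := [ffun k => (k == j)%:R].
exists n, (fun j => p (delta j)), c => f.
have -> : \sum_(j < n) rE (p (delta j)) (g (tens (c j) f)) =
          p (\sum_(j < n) [ffun k => delta j k * i f j]).
  rewrite (af_sum _ pa); apply: eq_bigr => j _; by rewrite pr hc.
have -> : \sum_(j < n) [ffun k => delta j k * i f j] = i f.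
  apply/ffunP => k; rewrite sum_ffunE (bigD1 k) //= !ffunE eqxx mul1r big1 ?addr0 //.
  by move=> j /negPf nj; rewrite !ffunE eq_sym nj mul0r.
by rewrite pi.
Qed.

Lemma nondeg t : (forall y, central y -> K y t = 0) -> t = 0.
Proof.
move=> h; have [n [b [c db]]] := frame.
have TR : forall t, t = \sum_(j < n) tens (b j) (K (c j) t).
  apply: (indT (f1 := fun t => t)); first by [].
  - exact: (af_sumf (fun j => af_comp (tensaddr (b j)) (Kadd (c j)))).
  - move=> u v; under eq_bigr => j _ do rewrite Ktens -tensbal.
    by rewrite -(af_sum _ (tensaddl v)) -db.
have h0 : forall x, K x t = 0.
  apply: (indE (f1 := fun x => K x t) (f2 := fun _ => 0)); [exact: KaddL | exact: af_zero |].
  by move=> w a cw; rewrite Kbal Kl // h // (af0 (lEaddr a)).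
rewrite (TR t) big1 // => j _; by rewrite h0 (af0 (tensaddr _)).
Qed.

Lemma raise (th : E -> E) :
  (forall w w', central w -> central w' -> th (w + w') = th w + th w') ->
  (forall w z, central w -> centerA z -> th (rE w z) = rE (th w) z) ->
  exists t, forall y, central y -> K y t = th y.
Proof.
move=> tha thz.
have zb : zbalanced lE rE (fun w a => lE a (th w)).
  split.
  - by move=> w _; apply: lEaddl.
  - by move=> w w' a cw cw'; rewrite tha // lEaddr.
  - by move=> w z a cw cz; rewrite thz // -Ecent // -lEM cz.
have [Th [Tha ThE]] := extE zb.
have ThL : forall b x, Th (lE b x) = lE b (Th x).
  move=> b; apply: indE; [exact: (af_comp Tha (lEaddr b)) | exact: (af_comp (lEaddr b) Tha) |].
  by move=> w a cw; rewrite lrE cw -rEM !ThE // lEM.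
have [n [b [c db]]] := frame.
have Y : forall y, y = \sum_(j < n) lE (g (tens y (b j))) (c j).
  move=> y; apply/eqP; rewrite -subr_eq0; apply/eqP; apply: ginj => f.
  rewrite (afB _ _ (tensaddl f)) (afB _ _ gadd) (af_sum _ (af_comp gadd (tensaddl f))).
  under eq_bigr => j _ do rewrite g_l2 -g_r2.
  by rewrite -(af_sum _ (af_comp gadd (tensaddr y))) -db subrr.
exists (\sum_(j < n) tens (b j) (Th (c j))) => y cy.
rewrite (af_sum _ (Kadd y)); under eq_bigr => j _ do rewrite Ktens -ThL.
by rewrite -(af_sum _ Tha) -Y -{1}[y]rE1 ThE // lE1.
Qed.

Lemma d0_1 : d0 1 = 0.
Proof.
have h := d0M 1 1; rewrite mulr1 rE1 lE1 in h.
by apply: (addrI (d0 1)); rewrite addr0 -h.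
Qed.
Lemma d0_k (k : R[i]) : d0 k%:A = 0.
Proof.
by case: Hcalc => _ _ [_ hk _] _ _; rewrite hk d0_1 (af0 (lEaddr _)).
Qed.

Definition Qinv w := epsilon (inhabits 0) (fun f => F f /\ wedgeT f = w).
Lemma QinvP w : F (Qinv w) /\ wedgeT (Qinv w) = w.
Proof. by apply: (epsilon_spec (inhabits 0) (fun f => F f /\ wedgeT f = w)); case: H2Q. Qed.
Lemma Qinvadd : additive_fun Qinv.
Proof.
move=> x y; case: H2Q => inj _; apply: inj.
- exact: (proj1 (QinvP _)).
- by case: HF => _ hD _ _; apply: hD; exact: (proj1 (QinvP _)).
- by rewrite wTadd !(proj2 (QinvP _)).
Qed.
Lemma QinvR w a : Qinv (rO w a) = rT (Qinv w) a.
Proof.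
case: H2Q => inj _; apply: inj.
- exact: (proj1 (QinvP _)).
- by apply: Fr; exact: (proj1 (QinvP _)).
- by rewrite wTr !(proj2 (QinvP _)).
Qed.

Lemma nab_ex : exists nab : E -> T, [/\ additive_fun nab,
  (forall e a, nab (rE e a) = rT (nab e) a + tens e (d0 a)) &
  (forall e, wedgeT (nab e) + d1 e = 0)].
Proof.
have [n [b [c db]]] := frame.
pose nG e := \sum_(j < n) tens (b j) (d0 (g (tens (c j) e))).
have nGadd : additive_fun nG.
  exact: (af_sumf (fun j => af_comp (tensaddr _) (af_comp d0add (af_comp gadd (tensaddr (c j)))))).
have nGL : forall e a, nG (rE e a) = rT (nG e) a + tens e (d0 a).
  move=> e a; rewrite /nG (af_sum _ (rTadd a)) {3}(db e) (af_sum _ (tensaddl _)) -big_split.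
  by apply: eq_bigr => j _; rewrite g_r2 d0M tensaddr rTE tensbal.
pose tau e := wedgeT (nG e) + d1 e.
have tauadd : additive_fun tau by exact: (af_add (af_comp wTadd nGadd) d1add).
have taur : forall e a, tau (rE e a) = rO (tau e) a.
  move=> e a; rewrite /tau nGL wTadd wTr wTE d1r (rOaddl a).
  by rewrite addrACA subrr addr0.
exists (fun e => nG e - Qinv (tau e)); split.
- exact: (af_add nGadd (af_opp (af_comp Qinvadd tauadd))).
- by move=> e a; rewrite nGL taur QinvR (afB _ _ (rTadd a)) addrAC.
- move=> e; rewrite (afB _ _ wTadd) (proj2 (QinvP _)) /tau.
  by rewrite opprD addrA subrr add0r addNr.
Qed.

Definition is_conn (nab : E -> T) := [/\ additive_fun nab,
  (forall e a, nab (rE e a) = rT (nab e) a + tens e (d0 a)) &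
  (forall e, wedgeT (nab e) + d1 e = 0)].

Definition nab1 := epsilon (inhabits (fun _ => 0)) is_conn.
Lemma nab1P : is_conn nab1.
Proof. exact: (epsilon_spec (inhabits (fun _ => 0)) is_conn nab_ex). Qed.
Lemma nab1add : additive_fun nab1. Proof. by case: nab1P. Qed.
Lemma nab1L e a : nab1 (rE e a) = rT (nab1 e) a + tens e (d0 a). Proof. by case: nab1P. Qed.
Lemma nab1tor e : wedgeT (nab1 e) + d1 e = 0. Proof. by case: nab1P. Qed.

Definition B x y := d0 (g (tens x y)) - K y (nab1 x) - K x (nab1 y).

Lemma Bsym x y : central x -> central y -> B x y = B y x.
Proof. by move=> cx cy; rewrite /B (gsym x cy) addrAC. Qed.

Lemma B_rz x y z : central x -> central y -> centerA z -> B x (rE y z) = rE (B x y) z.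
Proof.
move=> cx cy cz; rewrite /B Kbal Kl // [lE z _]Ecent // g_r2 d0M nab1L (Kadd x) Kr Ktens.
by rewrite !(afB _ _ (rEaddl z)) zmod1.
Qed.
Lemma B_lz x y z : central x -> central y -> centerA z -> B (rE x z) y = rE (B x y) z.
Proof.
move=> cx cy cz; rewrite Bsym //; last exact: central_rE.
by rewrite B_rz // Bsym.
Qed.
Lemma BaddR x y y' : central x -> central y -> central y' -> B x (y + y') = B x y + B x y'.
Proof.
move=> cx cy cy'; rewrite /B (tensaddr x) gadd d0add KaddL nab1add (Kadd x).
by rewrite zmod2.
Qed.
Lemma BaddL x x' y : central x -> central x' -> central y -> B (x + x') y = B x y + B x' y.
Proof.
move=> cx cx' cy; rewrite Bsym ?BaddR ?(Bsym cx) ?(Bsym cx') //; exact: centralD.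
Qed.

Definition hf : A := (2^-1 : R[i])%:A.
Lemma hfhf : hf + hf = 1.
Proof.
have h2 : (2^-1 : R[i]) + 2^-1 = 1.
  by rewrite -mulr2n -[_ *+ 2]mulr_natr mulVf // pnatr_eq0.
by rewrite /hf -scalerDl h2 scale1r.
Qed.
Lemma hfC a : hf * a = a * hf.
Proof. by rewrite /hf -scalerAl mul1r -scalerAr mulr1. Qed.
Lemma half2 (a : A) : hf * (a + a) = a.
Proof. by rewrite mulrDr -mulrDl hfhf mul1r. Qed.
Lemma halfO (x : O2) : x + x = 0 -> x = 0.
Proof.
move=> h; rewrite -(lO1 x) -hfhf (lOaddl x) -(lOaddr hf) h.
exact: (af0 (lOaddr hf)).
Qed.

Definition beta x y z := g (tens (B x y) z).
Definition Gam x y z := hf * (beta x y z + beta x z y - beta y z x).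

Lemma GamS x y z : central y -> central z -> Gam x y z = Gam x z y.
Proof. by move=> cy cz; rewrite /Gam /beta (Bsym cy cz) (addrC (g (tens (B x y) z))). Qed.

Lemma GamC x y z : central x -> central y -> Gam x y z + Gam y x z = beta x y z.
Proof.
move=> cx cy; rewrite /Gam -mulrDr /beta (Bsym cy cx) zmod4.
exact: half2.
Qed.

Lemma g_rz u v c : centerA c -> g (tens (rE u c) v) = g (tens u v) * c.
Proof. by move=> cc; rewrite tensbal Ecent // g_r2. Qed.

Lemma GamD1 x x' y z : central x -> central x' -> central y -> central z ->
  Gam (x + x') y z = Gam x y z + Gam x' y z.
Proof.
move=> cx cx' cy cz; rewrite /Gam /beta !BaddL // (tensaddl z (B x y)) (tensaddl y (B x z)) (tensaddr (B y z) x x') !gadd.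
by rewrite zmod2' mulrDr.
Qed.
Lemma GamD2 x y y' z : central x -> central y -> central y' -> central z ->
  Gam x (y + y') z = Gam x y z + Gam x y' z.
Proof.
move=> cx cy cy' cz; rewrite /Gam /beta BaddR // BaddL // (tensaddl z (B x y)) (tensaddl x (B y z)) (tensaddr (B x z) y y') !gadd.
by rewrite zmod2' mulrDr.
Qed.
Lemma GamD3 x y z z' : central x -> central y -> central z -> central z' ->
  Gam x y (z + z') = Gam x y z + Gam x y z'.
Proof.
move=> cx cy cz cz'; rewrite /Gam /beta !BaddR // (tensaddl y (B x z)) (tensaddl x (B y z)) (tensaddr (B x y) z z') !gadd.
by rewrite zmod2' mulrDr.
Qed.
Lemma GamZ1 x y z c : central x -> central y -> central z -> centerA c ->
  Gam (rE x c) y z = Gam x y z * c.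
Proof.
move=> cx cy cz cc; rewrite /Gam /beta !B_lz // !g_rz // g_r2.
by rewrite -mulrDl -mulrBl mulrA.
Qed.
Lemma GamZ2 x y z c : central x -> central y -> central z -> centerA c ->
  Gam x (rE y c) z = Gam x y z * c.
Proof.
move=> cx cy cz cc; rewrite /Gam /beta B_rz // B_lz // !g_rz // g_r2.
by rewrite -mulrDl -mulrBl mulrA.
Qed.
Lemma GamZ3 x y z c : central x -> central y -> central z -> centerA c ->
  Gam x y (rE z c) = Gam x y z * c.
Proof.
move=> cx cy cz cc; rewrite /Gam /beta !B_rz // !g_rz // g_r2.
by rewrite -mulrDl -mulrBl mulrA.
Qed.

Lemma rep (f : E -> A) :
  (forall z z', central z -> central z' -> f (z + z') = f z + f z') ->
  (forall z c, central z -> centerA c -> f (rE z c) = f z * c) ->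
  exists e, forall z, central z -> g (tens e z) = f z.
Proof.
move=> fa fz.
have zb : zbalanced lE rE (fun z a => f z * a).
  split.
  - by move=> z _ a b; rewrite mulrDr.
  - by move=> z z' a cz cz'; rewrite fa // mulrDl.
  - by move=> z c a cz cc; rewrite fz // mulrA.
have [H [Ha HE]] := extE zb.
have HR : forall f0 b, H (rE f0 b) = H f0 * b.
  move=> f0 b; move: f0; apply: indE.
  - exact: (af_comp Ha (rEaddl b)).
  - by move=> u v; rewrite Ha mulrDl.
  - by move=> w a cw; rewrite -rEM !HE // mulrA.
have [e he] := gsurj Ha HR.
by exists e => z cz; rewrite he -{1}[z]rE1 HE // mulr1.
Qed.

Definition eta x y := epsilon (inhabits 0)
  (fun e => forall z, central z -> g (tens e z) = Gam x y z).
Lemma etaP x y : central x -> central y ->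
  forall z, central z -> g (tens (eta x y) z) = Gam x y z.
Proof.
move=> cx cy; apply: (epsilon_spec (inhabits 0) (fun e => forall z, central z -> g (tens e z) = Gam x y z)).
apply: rep.
- by move=> z z' cz cz'; rewrite GamD3.
- by move=> z c cz cc; rewrite GamZ3.
Qed.

Lemma etaD1 x x' y : central x -> central x' -> central y -> eta (x + x') y = eta x y + eta x' y.
Proof.
move=> cx cx' cy; apply: pair_inj => z cz.
by rewrite tensaddl gadd !etaP ?GamD1 //; exact: centralD.
Qed.
Lemma etaD2 x y y' : central x -> central y -> central y' -> eta x (y + y') = eta x y + eta x y'.
Proof.
move=> cx cy cy'; apply: pair_inj => z cz.
by rewrite tensaddl gadd !etaP ?GamD2 //; exact: centralD.
Qed.
Lemma etaZ1 x y c : central x -> central y -> centerA c -> eta (rE x c) y = rE (eta x y) c.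
Proof.
move=> cx cy cc; apply: pair_inj => z cz.
by rewrite g_rz // !etaP ?GamZ1 //; exact: central_rE.
Qed.
Lemma etaZ2 x y c : central x -> central y -> centerA c -> eta x (rE y c) = rE (eta x y) c.
Proof.
move=> cx cy cc; apply: pair_inj => z cz.
by rewrite g_rz // !etaP ?GamZ2 //; exact: central_rE.
Qed.
Lemma etaC x y : central x -> central y -> eta x y + eta y x = B x y.
Proof.
move=> cx cy; apply: pair_inj => z cz.
by rewrite tensaddl gadd !etaP // GamC.
Qed.

Lemma Keq t t' : (forall y, central y -> K y t = K y t') -> t = t'.
Proof.
move=> h; apply/eqP; rewrite -subr_eq0; apply/eqP; apply: nondeg => y cy.
by rewrite (afB _ _ (Kadd y)) h // subrr.
Qed.

Definition Lc x := epsilon (inhabits 0) (fun t => forall y, central y -> K y t = eta x y).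
Lemma LcP x : central x -> forall y, central y -> K y (Lc x) = eta x y.
Proof.
move=> cx; apply: (epsilon_spec (inhabits 0) (fun t => forall y, central y -> K y t = eta x y)).
apply: raise.
- by move=> w w' cw cw'; rewrite etaD2.
- by move=> w c cw cc; rewrite etaZ2.
Qed.
Lemma LcD x x' : central x -> central x' -> Lc (x + x') = Lc x + Lc x'.
Proof.
move=> cx cx'; apply: Keq => y cy.
by rewrite (Kadd y) !LcP ?etaD1 //; exact: centralD.
Qed.
Lemma LcZ x c : central x -> centerA c -> Lc (rE x c) = rT (Lc x) c.
Proof.
move=> cx cc; apply: Keq => y cy.
by rewrite Kr !LcP ?etaZ1 //; exact: central_rE.
Qed.

Definition LtSpec (L : E -> T) :=
  additive_fun L /\ forall w a, central w -> L (rE w a) = rT (Lc w) a.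
Lemma Lt_ex : exists L, LtSpec L.
Proof.
apply: extE; split.
- by move=> w _; apply: rTaddr.
- by move=> w w' a cw cw'; rewrite LcD // rTadd.
- by move=> w c a cw cc; rewrite LcZ // rTM.
Qed.
Definition Lt := epsilon (inhabits (fun _ => 0)) LtSpec.
Lemma LtP : LtSpec Lt. Proof. exact: (epsilon_spec _ _ Lt_ex). Qed.
Lemma Ltadd : additive_fun Lt. Proof. by case: LtP. Qed.
Lemma LtE w a : central w -> Lt (rE w a) = rT (Lc w) a. Proof. by case: LtP => _; apply. Qed.
Lemma LtR e b : Lt (rE e b) = rT (Lt e) b.
Proof.
move: e; apply: indE.
- exact: (af_comp Ltadd (rEaddl b)).
- exact: (af_comp (rTadd b) Ltadd).
- by move=> w a cw; rewrite -rEM !LtE // rTM.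
Qed.
Lemma Ltc w : central w -> Lt w = Lc w.
Proof. by move=> cw; rewrite -{1}[w]rE1 LtE // rT1. Qed.

Lemma Lc_sym x : central x -> sig (Lc x) = Lc x.
Proof.
move=> cx; apply: Keq => y cy; apply: pair_inj => z cz.
by rewrite SW // !LcP // !etaP // GamS.
Qed.
Lemma sym_wedge t : sig t = t -> wedgeT t = 0.
Proof.
move=> h; apply: halfO.
have : wedgeT (sig t) = wedgeT t by rewrite h.
rewrite /sig (afB _ _ wTadd) mulr2n wTadd (proj1 (HPsym t)) addr0 sub0r => e.
by rewrite -{1}e addNr.
Qed.
Lemma Lt_wedge e : wedgeT (Lt e) = 0.
Proof.
apply: (indE (f1 := fun e => wedgeT (Lt e)) (f2 := fun _ => 0)).
- exact: (af_comp wTadd Ltadd).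
- exact: af_zero.
- by move=> w a cw; rewrite LtE // wTr sym_wedge ?Lc_sym // (af0 (rOaddl a)).
Qed.

Definition nab e := nab1 e + Lt e.
Lemma nabadd : additive_fun nab. Proof. exact: (af_add nab1add Ltadd). Qed.
Lemma nabL e a : nab (rE e a) = rT (nab e) a + tens e (d0 a).
Proof. by rewrite /nab nab1L LtR (rTadd a) addrAC. Qed.
Lemma nabtor e : wedgeT (nab e) + d1 e = 0.
Proof. by rewrite /nab wTadd Lt_wedge addr0 nab1tor. Qed.
Lemma compK (n : E -> T) w e : central w -> central e ->
  gid (sigma23 (rtens (n w) e) + tens3 w (n e)) = K e (n w) + K w (n e).
Proof. by move=> cw ce; rewrite gidadd compatK. Qed.
Lemma nabcomp w e : central w -> central e -> K e (nab w) + K w (nab e) = d0 (g (tens w e)).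
Proof.
move=> cw ce; rewrite /nab (Kadd e) (Kadd w) !Ltc // !LcP //.
by rewrite addrACA etaC // /B zmod3.
Qed.

Lemma main :

  let is_connection (nabla : E -> T) :=
    [/\ additive_fun nabla,
        (forall (k : R[i]) e, nabla (rE e k%:A) = rT (nabla e) k%:A) &
        (forall e a, nabla (rE e a) = rT (nabla e) a + tens e (d0 a))] in
  let torsionless (nabla : E -> T) := forall e, wedgeT (nabla e) + d1 e = 0 in
  let compatible (nabla : E -> T) :=
    forall w e, central_el lE rE w -> central_el lE rE e ->
      gid (sigma23 (rtens (nabla w) e) + tens3 w (nabla e)) = d0 (g (tens w e)) in
  exists nabla : E -> T,
    [/\ is_connection nabla, torsionless nabla & compatible nabla] /\
    forall nabla' : E -> T,
      [/\ is_connection nabla', torsionless nabla' & compatible nabla'] ->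
      nabla' =1 nabla.
Proof.
move=> ic tl cp; rewrite {}/ic {}/tl {}/cp.
exists nab; split.
  split; [split | |].
  - exact: nabadd.
  - by move=> k e; rewrite nabL d0_k (af0 (tensaddr e)) addr0.
  - exact: nabL.
  - exact: nabtor.
  - by move=> w e cw ce; rewrite compK // nabcomp.
move=> nab' [[n'add n'k n'L] n'tor n'comp].
pose D e := nab' e - nab e.
have Dadd : additive_fun D by exact: (af_add n'add (af_opp nabadd)).
have DR : forall e a, D (rE e a) = rT (D e) a.
  move=> e a; rewrite /D n'L nabL (afB _ _ (rTadd a)).
  by rewrite opprD addrACA subrr addr0.
have Dw : forall e, wedgeT (D e) = 0.
  move=> e; rewrite /D (afB _ _ wTadd); apply/eqP; rewrite subr_eq0; apply/eqP.
  by apply: (addIr (d1 e)); rewrite n'tor nabtor.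
have Dsym : forall e, sig (D e) = D e.
  move=> e; rewrite /sig (@PsymU (D e) (D e)) ?mulr2n ?addrK // subrr.
  by case: HF.
have Dc : forall w e, central w -> central e -> K e (D w) + K w (D e) = 0.
  move=> w e cw ce; have c1 := n'comp w e cw ce; rewrite compK // in c1.
  rewrite /D !(afB _ _ (Kadd _)) addrACA -opprD c1 nabcomp // subrr //.
pose GD x y z := g (tens (K y (D x)) z).
have GS : forall x y z, central y -> central z -> GD x y z = GD x z y.
  by move=> x y z cy cz; rewrite /GD -{1}(Dsym x) SW.
have GA : forall x y z, central x -> central y -> GD x y z = - GD y x z.
  move=> x y z cx cy; rewrite /GD.
  have -> : K y (D x) = - K x (D y) by apply/eqP; rewrite -addr_eq0 Dc.
  by rewrite (afN _ (tensaddl z)) (afN _ gadd).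
have G0 : forall x y z, central x -> central y -> central z -> GD x y z = 0.
  move=> x y z cx cy cz.
  have h : GD x y z = - GD x y z.
    by rewrite {1}GA // GS // GA // opprK GS // GA // GS.
  by rewrite -[LHS]half2 {2}h subrr mulr0.
have Kz : forall x y, central x -> central y -> K y (D x) = 0.
  move=> x y cx cy; apply: pair_inj => z cz.
  by have := G0 x y z cx cy cz; rewrite /GD => ->; rewrite (af0 (tensaddl z)) (af0 gadd).
have Dc0 : forall x, central x -> D x = 0 by move=> x cx; apply: nondeg => y cy; apply: Kz.
have D0 : forall e, D e = 0.
  apply: (indE (f1 := D) (f2 := fun _ => 0)) => //; first exact: af_zero.
  by move=> w a cw; rewrite DR Dc0 // (af0 (rTadd a)).
by move=> e; apply/eqP; rewrite -subr_eq0; apply/eqP; apply: D0.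
Qed.

End Main.

Theorem theorem6p1
  (R : realType) (A : algType R[i])
  (* the differential calculus in degrees <= 2 *)
  (E : zmodType) (lE : A -> E -> E) (rE : E -> A -> E)
  (O2 : zmodType) (lO : A -> O2 -> O2) (rO : O2 -> A -> O2)
  (d0 : A -> E) (d1 : E -> O2) (wedge : E -> E -> O2)
  (Hcalc : diff_calculus lE rE lO rO d0 d1 wedge)
  (HEproj : fg_projective rE)
  (* T = E (x)_A E, with its bimodule structure and the induced wedge *)
  (T : zmodType) (tens : E -> E -> T) (HT : is_tensor rE lE tens)
  (lT : A -> T -> T) (rT : T -> A -> T)
  (HlT : (forall a, additive_fun (lT a)) /\
         forall a x y, lT a (tens x y) = tens (lE a x) y)
  (HrT : (forall a, additive_fun (rT^~ a)) /\
         forall a x y, rT (tens x y) a = tens x (rE y a))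
  (wedgeT : T -> O2)
  (HwedgeT : additive_fun wedgeT /\ forall x y, wedgeT (tens x y) = wedge x y)
  (* (1) E = Z(E) (x)_{Z(A)} A via the multiplication map mu *)
  (T1 : zmodType) (t1 : E -> A -> T1) (HT1 : is_ztensor lE rE t1)
  (mu : T1 -> E)
  (Hmu : additive_fun mu /\
         forall w a, central_el lE rE w -> mu (t1 w a) = rE w a)
  (H1 : bijective mu)
  (* (2) T = ker wedge (+) F, F a right submodule, Q = wedge|_F an iso *)
  (F : T -> Prop)
  (HF : [/\ F 0, (forall t t', F t -> F t' -> F (t + t')),
            (forall t, F t -> F (- t)) & (forall t a, F t -> F (rT t a))])
  (H2sum : (forall t, exists k f, [/\ wedgeT k = 0, F f & t = k + f]) /\
           (forall t, wedgeT t = 0 -> F t -> t = 0))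
  (H2Q : (forall f f', F f -> F f' -> wedgeT f = wedgeT f' -> f = f') /\
         (forall w, exists f, F f /\ wedgeT f = w))
  (* P_sym: the idempotent with image ker wedge and kernel F *)
  (Psym : T -> T)
  (HPsym : forall t, wedgeT (Psym t) = 0 /\ F (t - Psym t))
  (* (3) sigma = 2 P_sym - 1 is the flip on central elements *)
  (H3 : forall w e, central_el lE rE w -> central_el lE rE e ->
          Psym (tens w e) *+ 2 - tens w e = tens e w)
  (* g : a pseudo-Riemannian bilinear metric *)
  (g : T -> A)
  (Hg : [/\ additive_fun g, (forall a t, g (lT a t) = a * g t),
            (forall a t, g (rT t a) = g t * a),
            (forall t, g (Psym t *+ 2 - t) = g t) &
            (forall e, (forall f, g (tens e f) = 0) -> e = 0) /\
            (forall phi : E -> A, additive_fun phi ->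
               (forall f b, phi (rE f b) = phi f * b) ->
               exists e, forall f, g (tens e f) = phi f)])
  (* T3 = E (x)_A (E (x)_A E) and the maps needed for compatibility *)
  (T3 : zmodType) (tens3 : E -> T -> T3) (HT3 : is_tensor rE lT tens3)
  (rtens : T -> E -> T3)  (* X (x) eta, for X in E (x) E *)
  (Hrtens : (forall e, additive_fun (rtens^~ e)) /\
            forall x y e, rtens (tens x y) e = tens3 x (tens y e))
  (sigma23 : T3 -> T3)     (* id (x) sigma *)
  (Hsigma23 : additive_fun sigma23 /\
              forall x t, sigma23 (tens3 x t) = tens3 x (Psym t *+ 2 - t))
  (gid : T3 -> E)          (* g (x) id *)
  (Hgid : additive_fun gid /\
          forall x y z, gid (tens3 x (tens y z)) = lE (g (tens x y)) z) :
  let is_connection (nabla : E -> T) :=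
    [/\ additive_fun nabla,
        (forall (k : R[i]) e, nabla (rE e k%:A) = rT (nabla e) k%:A) &
        (forall e a, nabla (rE e a) = rT (nabla e) a + tens e (d0 a))] in
  let torsionless (nabla : E -> T) := forall e, wedgeT (nabla e) + d1 e = 0 in
  let compatible (nabla : E -> T) :=
    forall w e, central_el lE rE w -> central_el lE rE e ->
      gid (sigma23 (rtens (nabla w) e) + tens3 w (nabla e)) = d0 (g (tens w e)) in
  exists nabla : E -> T,
    [/\ is_connection nabla, torsionless nabla & compatible nabla] /\
    forall nabla' : E -> T,
      [/\ is_connection nabla', torsionless nabla' & compatible nabla'] ->
      nabla' =1 nabla.
Proof.
intros.
eapply main; eassumption.
Qed.
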